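(* Let $q>2$ be a prime power, let $n\ge1$ with $\gcd(n,q-1)=1$, let $f(x)$ be a monic irreducible polynomial of degree $n$ over $\mathbb{F}_q$, and let $\theta$ be a primitive element of $\mathbb{F}_q$. Let $R(x)$ be the remainder of $x^q-\theta x$ modulo $f(x)$, and let $\psi(x)=\sum_{u=0}^{n}\psi_u x^u\in\mathbb{F}_q[x]$ be the monic nonzero polynomial of least degree satisfying $$\sum_{u=0}^{n}\psi_u\,(R(x))^u\equiv 0\pmod{f(x)}.$$ Then $\psi(x)$ is an irreducible polynomial of degree $n$ over $\mathbb{F}_q$, and $F(x)=\psi(x^q-\theta x)/f(x)$ is an irreducible polynomial of degree $n(q-1)$ over $\mathbb{F}_q$.
   Context: A primitive element of $\mathbb{F}_q$ is a generator of the cyclic group $\mathbb{F}_q^*$. *)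

(* Defs.v *)
From HB Require Import structures.
From mathcomp Require Import all_boot all_order all_algebra all_fingroup all_field.
Set Implicit Arguments.
Unset Strict Implicit.
Unset Printing Implicit Defensive.

(* Main.v *)
Require Import Defs.
From HB Require Import structures.
From mathcomp Require Import all_boot all_order all_algebra all_fingroup all_field.
Import GRing.Theory.
Local Open Scope ring_scope.
Set Implicit Arguments.
Unset Strict Implicit.
Unset Printing Implicit Defensive.


Lemma irr_min (R : fieldType) (p : {poly R}) (Z : {poly R} -> bool) :
  (forall a b, Z (a * b) -> Z a || Z b) -> Z p -> (1 < size p)%N ->
  (forall g, g != 0 -> Z g -> (size p <= size g)%N) -> irreducible_poly p.
Proof.
move=> ZM Zp sp min; split=> // d sd1 dvd.
have p0 : p != 0 by rewrite -size_poly_gt0 ltnW.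
have /dvdpP[h Dp] := dvd.
have d0 : d != 0 by apply: contraNneq p0 => d0; rewrite Dp d0 mulr0.
have h0 : h != 0 by apply: contraNneq p0 => h0; rewrite Dp h0 mul0r.
have hdvd : h %| p by rewrite Dp dvdp_mulr.
have /orP[Zh|Zd] := ZM h d (eq_ind_r Z Zp (esym Dp)).
  have le1 := min h h0 Zh; have le2 := dvdp_leq p0 hdvd.
  move: (size_mul h0 d0); rewrite -Dp => E.
  have: ((size h + size d).-1 <= size h)%N by rewrite -E.
  have : (0 < size d)%N by rewrite size_poly_gt0.
  case: (size d) sd1 => [|[|k]] //= _ _.
  by rewrite addnS /= addnS ltnNge leq_addr.
rewrite -dvdp_size_eqp // eqn_leq dvdp_leq //=.
exact: min.
Qed.

Lemma coprime_or_dvd (R : fieldType) (f p : {poly R}) :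
  irreducible_poly f -> coprimep f p \/ f %| p.
Proof.
move=> irr; have [e|e] := irredp_XsubCP irr (dvdp_gcdl f p).
  by left; rewrite -gcdp_eqp1.
by right; rewrite -(eqp_dvdl _ e) dvdp_gcdr.
Qed.

Lemma zmod4 (V : zmodType) (a b c d : V) : a - b - (c - d) = a - c - (b - d).
Proof. rewrite !opprB -!addrA; congr (_ + _). rewrite addrCA [RHS]addrCA [- b - c]addrC. reflexivity. Qed.

Section Ext.
Variables (F : finFieldType) (L : fieldExtType F).
Local Notation "p ^^" := (map_poly (in_alg L) p) (at level 2, format "p ^^").

Lemma irr_root_dvd (f p : {poly F}) (x : L) :
  irreducible_poly f -> root f^^ x -> root p^^ x -> f %| p.
Proof.
move=> irr rf rp; case: (coprime_or_dvd p irr) => // cop.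
have := coprimep_root (q := p^^) _ rf; rewrite coprimep_map (rootP rp) eqxx.
by move=> /(_ cop).
Qed.

Lemma dim_le (x : L) (p : {poly F}) : p != 0 -> root p^^ x -> (\dim <<1; x>> < size p)%N.
Proof.
move=> p0 rp.
have: minPoly 1 x %| p^^ by apply: minPoly_dvdp => //; apply/polyOver1P; exists p.
move/dvdp_leq; rewrite map_poly_eq0 => /(_ p0).
by rewrite size_minPoly size_map_poly dim_Fadjoin dimv1 muln1.
Qed.

Lemma dim_ge (x : L) : exists2 g : {poly F}, root g^^ x & size g = (\dim <<1; x>>).+1.
Proof.
have /polyOver1P[g Dg] := minPolyOver 1 x.
exists g; first by rewrite -Dg root_minPoly.
by rewrite -(size_map_poly (in_alg L)) -Dg size_minPoly dim_Fadjoin dimv1 muln1.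
Qed.

Lemma irr_dim (f : {poly F}) (x : L) :
  irreducible_poly f -> root f^^ x -> \dim <<1; x>> = (size f).-1.
Proof.
move=> irr rf; have [g rg sg] := dim_ge x.
have g0 : g != 0 by rewrite -size_poly_gt0 sg.
have := dvdp_leq g0 (irr_root_dvd irr rf rg); rewrite sg.
have := dim_le (irredp_neq0 irr) rf.
by case: (size f) => // m; rewrite !ltnS /= => a b; apply/eqP; rewrite eqn_leq a b.
Qed.

Lemma expf_cardX (a : F) k : a ^+ (#|F| ^ k) = a.
Proof. by elim: k => // k IH; rewrite expnSr exprM IH expf_card. Qed.

Lemma fr_alg (a : F) k : (a%:A : L) ^+ (#|F| ^ k) = a%:A.
Proof. by rewrite -[in LHS]in_algE -rmorphXn /= expf_cardX. Qed.

Lemma fr_add (x y : L) : (x + y) ^+ #|F| = x ^+ #|F| + y ^+ #|F|.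
Proof.
have [p _ pcharFp] := finPcharP F; rewrite (card_pprimeChar pcharFp).
have pL : p \in [pchar L] by rewrite (pchar_lalg L).
elim: (logn _ _) => [|k IHk]; first by rewrite !expr1.
by rewrite expnSr !exprM IHk -!(pFrobenius_autE pL) rmorphD.
Qed.

Lemma kerX (y : L) (t : F) k : y ^+ #|F| = t%:A * y -> y ^+ (#|F| ^ k) = (t ^+ k)%:A * y.
Proof.
move=> Hy; elim: k => [|k IH]; first by rewrite expr1 expr0 scale1r mul1r.
rewrite expnS exprM Hy exprMn IH fr_alg mulrA -!in_algE -rmorphM /=.
by rewrite exprS.
Qed.


Variable t : F.
Definition Lx (y : L) := y ^+ #|F| - t%:A * y.

Lemma Lx_add : zmod_morphism Lx.
Proof.
move=> x y; rewrite /Lx.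
have e : (x - y) ^+ #|F| = x ^+ #|F| - y ^+ #|F|.
  by apply: (addIr (y ^+ #|F|)); rewrite -fr_add !subrK.
by rewrite e mulrBr zmod4.
Qed.

Lemma Lx_scale : scalable Lx.
Proof.
move=> a x; rewrite /Lx -[a *: x]mulr_algl -[a *: (_ - _)]mulr_algl exprMn.
have := fr_alg a 1; rewrite expn1 => ->.
by rewrite mulrBr mulrCA.
Qed.

HB.instance Definition _ := GRing.isZmodMorphism.Build L L Lx Lx_add.
HB.instance Definition _ := GRing.isScalable.Build F L L *:%R Lx Lx_scale.

Lemma Lx_pre (V W : {aspace L}) (x : L) :
  (V <= W)%VS -> (forall y, y \in W -> Lx y = 0 -> y = 0) ->
  x \in W -> Lx x \in V -> x \in V.
Proof.
move=> VW inj xW LxV; pose U := linfun Lx.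
have capV : (V :&: lker U = 0)%VS.
  apply/eqP; rewrite -subv0; apply/subvP => y /memv_capP[yV].
  rewrite memv_ker lfunE memv0 /= => /eqP /(inj _ (subvP VW _ yV)) ->; exact: eqxx.
have UV : (U @: V <= V)%VS.
  apply/subvP => _ /memv_imgP[v vV ->]; rewrite lfunE /= /Lx.
  by rewrite rpredB ?rpredX ?rpredM // rpredZ ?mem1v.
have EV : (U @: V)%VS = V.
  by apply/eqP; rewrite eqEdim UV (limg_dim_eq capV) leqnn.
move: LxV; rewrite -{1}EV => /memv_imgP[v vV]; rewrite lfunE /= => Ev.
have : x - v = 0.
  apply: inj; first by rewrite rpredB // (subvP VW).
  by rewrite raddfB /= Ev subrr.
by move/eqP; rewrite subr_eq0 => /eqP ->.
Qed.


Lemma theta_pow (K : {subfield L}) (y : L) :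
  y != 0 -> y \in K -> y ^+ #|F| = t%:A * y -> t ^+ (\dim K) = 1.
Proof.
move=> y0 yK Hy.
move: yK; rewrite Fermat's_little_theorem (kerX _ Hy) => /eqP E.
have : (t ^+ \dim K)%:A = (1 : L).
  by apply: (mulIf y0); rewrite E mul1r.
by rewrite -in_algE => /eqP; rewrite fmorph_eq1 => /eqP.
Qed.

Lemma Lx_inj (K : {subfield L}) (y : L) :
  (2 < #|F|)%N -> (#|F|.-1).-primitive_root t -> coprime (\dim K) (#|F|.-1) ->
  y \in K -> Lx y = 0 -> y = 0.
Proof.
move=> q2 prim cop yK /eqP; rewrite /Lx subr_eq0 => /eqP Hy.
apply/eqP; apply/negPn/negP => y0.
have := theta_pow y0 yK Hy; move/eqP; rewrite -(prim_order_dvd prim) => dv.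
move: cop; rewrite /coprime gcdnC (gcdn_idPl dv) => /eqP q1.
have q3 := q2; by rewrite -(prednK (ltnW (ltnW q3))) q1 in q2.
Qed.

End Ext.


Lemma split_root (F : finFieldType) (L : splittingFieldType F) (p r : {poly F}) :
  splittingFieldFor 1 (map_poly (in_alg L) p) {:L} -> r %| p -> (1 < size r)%N ->
  exists x : L, root (map_poly (in_alg L) r) x.
Proof.
case=> rs Dp _ rp sr.
have : map_poly (in_alg L) r %| \prod_(z <- rs) ('X - z%:P).
  by rewrite -(eqp_dvdr _ Dp) dvdp_map.
case/(dvdp_prod_XsubC (F := id)) => m.
case: (mask m rs) => [|z zs] Dr.
  move: Dr; rewrite big_nil => /eqp_size; rewrite size_map_poly size_poly1 => e.
  by rewrite e in sr.
by exists z; rewrite (eqp_root Dr) root_prod_XsubC mem_head.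
Qed.


Theorem mainTheorem7 (F : finFieldType) (n : nat) (f psi : {poly F}) (theta : F) :
  (2 < #|F|)%N -> (0 < n)%N -> coprime n (#|F|.-1) ->
  f \is monic -> irreducible_poly f -> size f = n.+1 ->
  (#|F|.-1).-primitive_root theta ->
  let R := ('X^#|F| - theta *: 'X) %% f in
  psi \is monic -> f %| psi \Po R ->
  (forall p : {poly F}, p != 0 -> f %| p \Po R -> (size psi <= size p)%N) ->
  [/\ irreducible_poly psi, size psi = n.+1,
      f %| psi \Po ('X^#|F| - theta *: 'X),
      irreducible_poly ((psi \Po ('X^#|F| - theta *: 'X)) %/ f)
    & size ((psi \Po ('X^#|F| - theta *: 'X)) %/ f) = (n * #|F|.-1).+1].
Proof.
move=> q2 n0 cop fmon firr sf prim R psimon fpsi min.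
have q1 : (1 < #|F|.-1)%N by rewrite -ltnS prednK // ltnW // ltnW.
set Xl := 'X^#|F| - theta *: 'X.
have f0 : f != 0 := irredp_neq0 firr.
have psi0 : psi != 0 := monic_neq0 psimon.
pose g := 'X^(#|F|.-1) - theta%:P : {poly F}.
have sg : size g = (#|F|.-1).+1 by rewrite size_XnsubC // ltnW.
have g0 : g != 0 by rewrite -size_poly_gt0 sg.
have fg0 : f * g != 0 by rewrite mulf_neq0.
have [L sL] := FinSplittingFieldFor fg0.
have sf1 : (1 < size f)%N by rewrite sf ltnS.
have sg1 : (1 < size g)%N by rewrite sg ltnS ltnW.
have [a ra] := split_root sL (dvdp_mulIl f g) sf1.
have [c rc] := split_root sL (dvdp_mulIr f g) sg1.
have hXl : forall y : L, (map_poly (in_alg L) Xl).[y] = Lx theta y.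
  by move=> y; rewrite /Xl rmorphB /= map_polyXn map_polyZ map_polyX !hornerE /Lx mulr_algl.
have hcomp : forall (p r : {poly F}) (y : L), (map_poly (in_alg L) (p \Po r)).[y]
    = (map_poly (in_alg L) p).[(map_poly (in_alg L) r).[y]].
  by move=> p r y; rewrite map_comp_poly horner_comp.
have hR : (map_poly (in_alg L) R).[a] = Lx theta a.
  rewrite -hXl /R; rewrite [in RHS](divp_eq Xl f) rmorphD rmorphM /= hornerD hornerM.
  by rewrite (rootP ra) mulr0 add0r.
set b := Lx theta a.
have HZ : forall p, (f %| p \Po R) = root (map_poly (in_alg L) p) b.
  move=> p; apply/idP/idP => H.
    have/dvdpP[h Dh] := H; rewrite /root /b -hR -hcomp Dh rmorphM /= hornerM.
    by rewrite (rootP ra) mulr0.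
  by apply: (irr_root_dvd firr ra); rewrite /root hcomp hR.
have rb : root (map_poly (in_alg L) psi) b by rewrite -HZ.
have dimW : \dim <<1; a>>%AS = n by rewrite (irr_dim firr ra) sf.
have bW : b \in <<1; a>>%AS.
  by rewrite /b /Lx rpredB ?rpredX ?rpredM ?memv_adjoin // rpredZ ?mem1v.
have VW : (<<1; b>>%AS <= <<1; a>>%AS)%VS by rewrite sub_adjoin1v.
have aV : a \in <<1; b>>%AS.
  apply: (Lx_pre VW); [| exact: memv_adjoin | exact: memv_adjoin].
  by move=> y yW; apply: (Lx_inj q2 prim _ yW); rewrite dimW.
have WV : (<<1; a>>%AS <= <<1; b>>%AS)%VS.
  by rewrite sub_adjoin1v.
have dimV : \dim <<1; b>>%AS = n.
  by apply/eqP; rewrite -dimW eqn_leq (dimvS VW) (dimvS WV).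
have spsi : size psi = n.+1.
  have := dim_le psi0 rb; rewrite dimV => le1.
  have [h rh sh] := dim_ge b.
  have h0 : h != 0 by rewrite -size_poly_gt0 sh.
  have := min h h0; rewrite HZ sh dimV => /(_ rh) le2.
  by apply/eqP; rewrite eqn_leq le1 le2.
have psiirr : irreducible_poly psi.
  apply: (irr_min (Z := fun p => root (map_poly (in_alg L) p) b)) => //.
  - by move=> p r; rewrite rmorphM rootM.
  - by rewrite spsi ltnS.
  - by move=> p p0 rp; apply: min => //; rewrite HZ.
have fP : f %| psi \Po Xl.
  by apply: (irr_root_dvd firr ra); rewrite /root hcomp hXl.
have Hc : c ^+ #|F| = theta%:A * c.
  move: rc; rewrite /root /g rmorphB /= map_polyXn map_polyC !hornerE subr_eq0.
  by move=> /eqP Hc; rewrite -(prednK (ltnW (ltnW q2))) exprS Hc mulrC.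
have Lxc : Lx theta c = 0 by rewrite /Lx Hc subrr.
have c0 : c != 0.
  apply/negP => /eqP c0; move: rc; rewrite c0 /root /g rmorphB /= map_polyXn map_polyC !hornerE.
  rewrite expr0n /= gtn_eqF ?(ltnW q1) // sub0r oppr_eq0 -in_algE fmorph_eq0 => /eqP t0.
  by move: (prim_expr_order prim); rewrite t0 expr0n gtn_eqF ?(ltnW q1) // => /eqP; rewrite eq_sym oner_eq0.
pose y := a + c.
have Lxy : Lx theta y = b by rewrite /y raddfD /= Lxc addr0.
pose E := <<1; y>>%AS.
have bE : b \in E by rewrite -Lxy /Lx rpredB ?rpredX ?rpredM ?memv_adjoin // rpredZ ?mem1v.
have aE : a \in E by apply: (subvP (_ : (<<1; b>>%AS <= E)%VS) _ aV); rewrite sub_adjoin1v.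
have cE : c \in E by rewrite (_ : c = y - a) ?rpredB ?memv_adjoin // /y addrC addKr.
have ndv : (n %| \dim E)%N by rewrite -dimW field_dimS // sub_adjoin1v.
have qdv : (#|F|.-1 %| \dim E)%N by rewrite (prim_order_dvd prim) (theta_pow c0 cE Hc).
have dimE : (n * #|F|.-1 <= \dim E)%N by rewrite dvdn_leq ?adim_gt0 // Gauss_dvd // ndv qdv.
have minE : forall p : {poly F}, p != 0 -> root (map_poly (in_alg L) p) y -> (n * #|F|.-1 < size p)%N.
  by move=> p p0 rp; apply: (leq_ltn_trans dimE); apply: dim_le.
have hP : psi \Po Xl = (psi \Po Xl) %/ f * f by rewrite divpK.
set Fq := (psi \Po Xl) %/ f in hP *.
have fy : ~~ root (map_poly (in_alg L) f) y.
  apply/negP => rf; have := minE f f0 rf; rewrite sf ltnS.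
  rewrite -[n in (_ <= n)%N]muln1 leq_pmul2l // leqNgt.
  by rewrite q1.
have rFq : root (map_poly (in_alg L) Fq) y.
  have : root (map_poly (in_alg L) (psi \Po Xl)) y.
    by rewrite /root hcomp hXl Lxy.
  by rewrite hP rmorphM rootM (negbTE fy) orbF.
have sXl : size Xl = (#|F|).+1.
  rewrite /Xl size_polyDl size_polyXn // size_polyN ltnS.
  by apply: (leq_trans (size_scale_leq _ _)); rewrite size_polyX ltnW.
have sP : size (psi \Po Xl) = (n * #|F|).+1.
  have := size_comp_poly psi Xl; rewrite spsi sXl /=.
  case: (size (psi \Po Xl)) => [|m] /= e; last by rewrite e.
  by move/eqP: e; rewrite eq_sym muln_eq0 (gtn_eqF n0) (gtn_eqF (ltnW (ltnW q2))).
have sFq : size Fq = (n * #|F|.-1).+1.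
  rewrite /Fq size_divp // sP sf /=.
  by rewrite -{1}(prednK (ltnW (ltnW q2))) mulnS addnC -addSn addnK.
split => //.
apply: (irr_min (Z := fun p => root (map_poly (in_alg L) p) y)) => //.
- by move=> p r; rewrite rmorphM rootM.
- by rewrite sFq ltnS muln_gt0 n0 ltnW.
- by move=> p p0 rp; rewrite sFq; apply: minE.
Qed.
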